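(* Let $\varphi:=\frac{16}{3}\mathbb{1}-2\sqrt5 f_{24}$ and $\widetilde\varphi(t):=\varphi(-t)$ on $\mathbb{Z}/24\mathbb{Z}$, and for $a:\mathbb{Z}/24\mathbb{Z}\to[0,\infty)$ let $\mathcal N(a):=\max(9\|a\|_\infty,\|a\|_1)$. Then for every $a:\mathbb{Z}/24\mathbb{Z}\to[0,\infty)$, $$\mathcal N\big((a*\varphi)_+\big)\le2\mathcal N(a)\quad\text{and}\quad \mathcal N\big((a*\widetilde\varphi)_+\big)\le2\mathcal N(a).$$
   Context: $\mathbb{1}$ is the constant function $1$ on $\mathbb{Z}/24\mathbb{Z}$; $f_{24}(t):=\#\{j\in\mathbb{Z}/24\mathbb{Z}:j^2\equiv t\ (\mathrm{mod}\ 24)\}$; $(a*\psi)(t):=\frac1{24}\sum_{j\in\mathbb{Z}/24\mathbb{Z}}a(j)\psi(t-j)$; $x_+:=\max(x,0)$ pointwise; $\|h\|_\infty:=\max_t|h(t)|$, $\|h\|_1:=\sum_t|h(t)|$. *)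

(* Defs.v *)
From mathcomp Require Import all_boot all_order all_algebra.
From mathcomp Require Import reals.
Set Implicit Arguments. Unset Strict Implicit. Unset Printing Implicit Defensive.
Import Order.TTheory GRing.Theory Num.Theory.
Local Open Scope ring_scope.

Definition Z24 := 'Z_24.

Definition f24 (t : Z24) : nat := #|[set j : Z24 | j * j == t]|.

Definition phi (R : realType) (t : Z24) : R :=
  16 / 3 - 2 * Num.sqrt 5 * (f24 t)%:R.

Definition phit (R : realType) (t : Z24) : R := phi R (- t).

Definition conv (R : realType) (a psi : Z24 -> R) (t : Z24) : R :=
  24^-1 * \sum_(j : Z24) a j * psi (t - j).

Definition posp (R : realType) (h : Z24 -> R) (t : Z24) : R := Num.max (h t) 0.

Definition norminf (R : realType) (h : Z24 -> R) : R :=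
  \big[Num.max/0]_(t : Z24) `|h t|.

Definition norm1 (R : realType) (h : Z24 -> R) : R := \sum_(t : Z24) `|h t|.

Definition NN (R : realType) (a : Z24 -> R) : R :=
  Num.max (9 * norminf a) (norm1 a).

(* Main.v *)
From Stdlib Require Import NArith Lia.
Require Import Defs.
From mathcomp Require Import all_boot all_order all_algebra.
From mathcomp Require Import reals ring lra.
Import Order.TTheory GRing.Theory Num.Theory.

Definition Fn (d : nat) : nat := count (fun j => (j * j) %% 24 == d) (iota 0 24).
Definition dif (t s : nat) : nat := ((t + (24 - s) %% 24) %% 24).
Definition row (s : nat) : seq N := [seq N.of_nat (33 * Fn (dif t s)) | t <- iota 0 24].

Fixpoint addv (g r : seq N) : seq N :=
  match g, r with x :: g', y :: r' => N.add x y :: addv g' r' | _, _ => [::] end.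
Fixpoint leafv (c : N) (g : seq N) (acc : N) : N :=
  match g with [::] => acc | x :: g' => leafv c g' (N.add acc (N.sub c x)) end.
Fixpoint walk (tbl : seq (seq N)) (k : nat) (c : N) (g : seq N) : bool :=
  match tbl with
  | [::] => N.leb (leafv c g 0%num) 3240%num
  | r :: tbl' => walk tbl' k c g &&
      (if (k < 9)%N then walk tbl' k.+1 (N.add c 40%num) (addv g r) else true)
  end.

Definition tbl0 := [seq row s | s <- iota 1 23].
Lemma walk_ok : walk tbl0 1 40%num (row 0) = true.
Proof. vm_compute. reflexivity. Qed.

Fixpoint selF (b : nat -> bool) (i : nat) (g : seq N) (tbl : seq (seq N)) : seq N :=
  match tbl with r :: tbl' => selF b i.+1 (if b i then addv g r else g) tbl' | [::] => g end.
Fixpoint cntF (b : nat -> bool) (i n : nat) : nat :=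
  match n with 0 => 0 | n'.+1 => b i + cntF b i.+1 n' end.

Lemma walk_sound tbl : forall k c g i b, walk tbl k c g ->
  (k + cntF b i (size tbl) <= 9)%N ->
  N.leb (leafv (N.add c (N.of_nat (40 * cntF b i (size tbl)))) (selF b i g tbl) 0%num) 3240%num.
Proof.
elim: tbl => [|r tbl IH] k c g i b /=.
  by rewrite ?muln0 N.add_0_r.
move=> /andP [H1 H2] Hk.
case: (b i) Hk => /= Hk.
- have Hk9 : (k < 9)%N by move: Hk; rewrite add1n addnS; apply: leq_trans; rewrite ltnS leq_addr.
  rewrite Hk9 in H2.
  have E : N.add c (N.of_nat (40 * (1 + cntF b i.+1 (size tbl)))) =
            N.add (N.add c 40%num) (N.of_nat (40 * cntF b i.+1 (size tbl))).
    rewrite mulnDr muln1 -plusE Nat2N.inj_add. rewrite N.add_assoc. by [].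
  rewrite E. apply: (IH k.+1) => //. by rewrite addSn -addnS.
- rewrite add0n. rewrite add0n in Hk. by have := IH k c g i.+1 b H1 Hk.
Qed.

Lemma size_addv g r : size r = size g -> size (addv g r) = size g.
Proof. elim: g r => [|x g IH] [|y r] //= [E]. by rewrite IH. Qed.

Lemma nth_addv g r t : size r = size g ->
  N.to_nat (nth 0%num (addv g r) t) = (N.to_nat (nth 0%num g t) + N.to_nat (nth 0%num r t))%N.
Proof.
elim: g r t => [|x g IH] [|y r] t //= E.
- by case: t.
- case: E => E. case: t => [|t] /=; first by rewrite N2Nat.inj_add plusE.
  exact: IH.
Qed.

Fixpoint sumF (b : nat -> bool) (i : nat) (tbl : seq (seq N)) (t : nat) : nat :=
  match tbl with r :: tbl' => (b i * N.to_nat (nth 0%num r t) + sumF b i.+1 tbl' t)%N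
  | [::] => 0%N end.

Lemma selF_sem b tbl : forall i g t, all (fun r => size r == size g) tbl ->
  size (selF b i g tbl) = size g /\
  N.to_nat (nth 0%num (selF b i g tbl) t) = (N.to_nat (nth 0%num g t) + sumF b i tbl t)%N.
Proof.
elim: tbl => [|r tbl IH] i g t /=; first by rewrite addn0.
move=> /andP [/eqP Hr Hall].
case: (b i) => /=.
- have Hs := @size_addv g r Hr.
  have Hall' : all (fun r0 => size r0 == size (addv g r)) tbl by rewrite Hs.
  have [-> ->] := IH i.+1 (addv g r) t Hall'.
  by rewrite Hs nth_addv // mul1n addnA.
- have [-> ->] := IH i.+1 g t Hall. by rewrite mul0n add0n.
Qed.

Lemma leafv_sem c g : forall acc, N.to_nat (leafv c g acc) =
  (N.to_nat acc + \sum_(x <- g) (N.to_nat c - N.to_nat x))%N.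
Proof.
elim: g => [|x g IH] acc /=; first by rewrite big_nil addn0.
by rewrite IH big_cons N2Nat.inj_add N2Nat.inj_sub plusE minusE addnA.
Qed.

Lemma cntF_big b n : forall i, cntF b i n = (\sum_(j < n) b (i + j))%N.
Proof.
elim: n => [|n IH] i /=; first by rewrite big_ord0.
by rewrite big_ord_recl IH addn0; congr addn; apply: eq_bigr => j _; rewrite /bump /= addSnnS.
Qed.

Lemma size_row s : size (row s) = 24%N.
Proof. by rewrite /row size_map size_iota. Qed.

Lemma nth_row s t : (t < 24)%N -> N.to_nat (nth 0%num (row s) t) = (33 * Fn (dif t s))%N.
Proof.
move=> Ht. rewrite /row (nth_map 0%N) ?size_iota // nth_iota // add0n. by rewrite Nat2N.id.
Qed.

Lemma sumF_big b t (Ht : (t < 24)%N) : forall n i,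
  sumF b i [seq row s | s <- iota i n] t = (\sum_(j < n) b (i + j) * (33 * Fn (dif t (i + j))))%N.
Proof.
elim => [|n IH] i /=; first by rewrite big_ord0.
rewrite big_ord_recl IH addn0 nth_row //; congr addn; apply: eq_bigr => j _; by rewrite /bump /= addSnnS.
Qed.

Lemma Nle_nat x y : (x <= y)%num -> (N.to_nat x <= N.to_nat y)%N.
Proof. move=> H; apply/ssrnat.leP; lia. Qed.

Lemma comp_nat (b : nat -> bool) : (1 + \sum_(j < 23) b (1 + j) <= 9)%N ->
  (\sum_(t < 24) (40 * (1 + \sum_(j < 23) b (1 + j)) -
     (33 * Fn (dif t 0) + \sum_(j < 23) b (1 + j) * (33 * Fn (dif t (1 + j))))) <= 3240)%N.
Proof.
move=> Hk.
have := @walk_sound tbl0 1 40%num (row 0) 1 b walk_ok.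
rewrite /tbl0 size_map size_iota cntF_big => /(_ Hk) /N.leb_le /Nle_nat.
rewrite leafv_sem N2Nat.inj_0 add0n.
have Hall : all (fun r => size r == size (row 0)) [seq row s | s <- iota 1 23].
  by apply/allP => r /mapP [s _ ->]; rewrite !size_row.
have [Hs _] := selF_sem b _ 1 (row 0) 0 Hall.
rewrite (big_nth 0%num) Hs size_row big_mkord.
move=> H. apply: leq_trans H. rewrite leq_eqVlt; apply/orP; left; apply/eqP.
apply: eq_bigr => t _.
have [_ ->] := selF_sem b _ 1 (row 0) t Hall.
rewrite nth_row // sumF_big //.
rewrite N2Nat.inj_add Nat2N.id plusE mulnDr muln1. by [].
Qed.

Definition VV (J : {set Z24}) : nat :=
  (\sum_(t : Z24) (40 * #|J| - 33 * \sum_(j in J) f24 (t - j)%R))%N.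

Lemma cardP_count (n : nat) (p : pred nat) :
  #|[set j : 'I_n | p (val j)]| = count p (iota 0 n).
Proof.
rewrite cardsE cardE /enum_mem size_filter -(val_enum_ord n) count_map.
rewrite enumT. apply: eq_count => x. by rewrite inE.
Qed.

Lemma f24_dif (t j : Z24) : f24 (t - j)%R = Fn (dif t j).
Proof.
rewrite /f24 /Fn -cardP_count. apply: eq_card => x. by rewrite !inE.
Qed.

Lemma VV0 (J : {set Z24}) : (0%R : Z24) \in J -> (#|J| <= 9)%N -> (VV J <= 3240)%N.
Proof.
move=> J0 Hk.
pose b := fun s : nat => ((inZp s : 'I_24) \in J).
have Lift : forall i : 'I_23, (lift ord0 i : 'I_24) = inZp (1 + i).
  move=> i; apply: val_inj => /=. by rewrite /bump /= add1n modn_small // ltnS.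
have Hc : #|J| = (1 + \sum_(j < 23) b (1 + j))%N.
  rewrite -sum1_card big_mkcond [LHS]big_ord_recl /=.
  have -> : (ord0 : 'I_24) \in J by [].
  congr addn; apply: eq_bigr => i _. by rewrite Lift /b; case: (_ \in J).
have Hg : forall t : Z24, (33 * \sum_(j in J) f24 (t - j)%R)%N =
   (33 * Fn (dif t 0) + \sum_(j < 23) b (1 + j) * (33 * Fn (dif t (1 + j))))%N.
  move=> t. rewrite big_mkcond big_distrr [LHS]big_ord_recl /=.
  have -> : (ord0 : 'I_24) \in J by [].
  rewrite f24_dif; congr addn. apply: eq_bigr => i _.
  rewrite Lift /b. case: (_ \in J) => /=; last by rewrite muln0 mul0n.
  by rewrite f24_dif mul1n /= add1n modn_small // ltnS.
have := @comp_nat b. rewrite -Hc => /(_ Hk) H.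
apply: leq_trans H. rewrite /VV leq_eqVlt; apply/orP; left; apply/eqP.
apply: eq_bigr => t _. by rewrite Hg.
Qed.

Lemma VV_shift (J : {set Z24}) (c : Z24) : VV [set (j - c)%R | j in J] = VV J.
Proof.
have inj : injective (fun j : Z24 => (j - c)%R) by apply: addIr.
rewrite /VV card_imset //.
rewrite (reindex_inj (addIr (- c)%R)) /=.
apply: eq_bigr => t _. congr (_ - 33 * _)%N.
rewrite big_imset /=; last by move=> x y _ _; apply: inj.
apply: eq_bigr => j _. congr f24. by rewrite opprB addrA subrK.
Qed.

Lemma VV_le (J : {set Z24}) : (#|J| <= 9)%N -> (VV J <= 3240)%N.
Proof.
move=> Hk.
case: (set_0Vmem J) => [->|[j0 Hj0]].
  rewrite /VV big1 // => t _. by rewrite cards0 muln0 sub0n.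
rewrite -(VV_shift J j0). apply: VV0.
  apply/imsetP; exists j0 => //. by rewrite GRing.subrr.
by rewrite card_imset //; apply: addIr.
Qed.

Local Open Scope ring_scope.

Section LP.
Variable R : realType.

Lemma lp (w a : Z24 -> R) (m : R) (k : nat) : forall (B : R) (D : {set Z24}),
  (forall J : {set Z24}, J \subset D -> (#|J| <= k)%N -> \sum_(j in J) w j <= B) ->
  (forall j, 0 <= a j <= m) ->
  \sum_(j in D) a j <= k%:R * m ->
  \sum_(j in D) a j * w j <= B * m.
Proof.
move: a; elim: k => [|k IH] a B D HJ Ha HS.
- have B0 : 0 <= B by have := HJ set0 (sub0set D); rewrite cards0 big_set0; apply.
  have m0 : 0 <= m by case/andP: (Ha 0) => h1 h2; apply: le_trans h2.
  have HS0 : \sum_(j in D) a j <= 0 by rewrite mul0r in HS.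
  have a0 : forall j, j \in D -> a j = 0.
    apply: psumr_eq0P; first by move=> j _; case/andP: (Ha j).
    apply/eqP; rewrite eq_le HS0 /=.
    by rewrite sumr_ge0 // => j _; case/andP: (Ha j).
  rewrite big1 ?mulr_ge0 // => j jD. by rewrite a0 // mul0r.
- have B0 : 0 <= B by have := HJ set0 (sub0set D); rewrite cards0 big_set0; apply.
  have m0 : 0 <= m by case/andP: (Ha 0) => h1 h2; apply: le_trans h2.
  have ag0 : forall j, 0 <= a j by move=> j; case/andP: (Ha j).
  have agm : forall j, a j <= m by move=> j; case/andP: (Ha j).
  case: (set_0Vmem D) => [->|[j1 j1D]]; first by rewrite big_set0 mulr_ge0.
  case: (@arg_maxP _ _ _ j1 (mem D) w j1D) => j0 j0D Hmax.
  case: (lerP (w j0) 0) => hw.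
    apply: (@le_trans _ _ (\sum_(j in D) 0)); last by rewrite big1 // mulr_ge0.
    apply: ler_sum => j jD. rewrite mulr_ge0_le0 //. exact: le_trans (Hmax j jD) hw.
  rewrite (big_setD1 _ j0D) /= (big_setD1 _ j0D) /= in HS *.
  set S' := \sum_(i in D :\ j0) a i in HS *.
  set X := \sum_(i in D :\ j0) a i * w i.
  have HSk : a j0 + S' <= k%:R * m + m by rewrite -[k.+1]addn1 natrD mulrDl mul1r in HS.
  have km0 : 0 <= k%:R * m by rewrite mulr_ge0.
  have S'0 : 0 <= S' by rewrite sumr_ge0.
  pose lam := if S' <= k%:R * m then 1 else k%:R * m / S'.
  have [l0 l1 lS lS'] : [/\ 0 <= lam, lam <= 1, lam * S' <= k%:R * m &
                         (1 - lam) * S' <= m - a j0].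
    rewrite /lam; case: (lerP S' (k%:R * m)) => hS.
      split => //; first by rewrite mul1r. by rewrite subrr mul0r subr_ge0.
    have S'p : 0 < S' by apply: le_lt_trans hS.
    have E : k%:R * m / S' * S' = k%:R * m by rewrite divfK // gt_eqF.
    split.
    - by rewrite divr_ge0 // ltW.
    - by rewrite ler_pdivrMr // mul1r ltW.
    - by rewrite E.
    - rewrite mulrBl mul1r E. lra.
  have HX : X <= S' * w j0.
    rewrite /X /S' mulr_suml. apply: ler_sum => j jD.
    apply: ler_wpM2l => //. apply: Hmax. by move: jD; rewrite inE => /andP [].
  have HY := IH (fun j => lam * a j) (B - w j0) (D :\ j0).
  have HY' : \sum_(i in D :\ j0) lam * a i * w i <= (B - w j0) * m.
    apply: HY.
    - move=> J JD Jk.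
      have j0J : j0 \notin J.
        apply/negP => /(subsetP JD). by rewrite !inE eqxx.
      have := HJ (j0 |: J).
      rewrite big_setU1 //= cardsU1 j0J add1n ltnS => H. 
      suff : w j0 + \sum_(j in J) w j <= B by lra.
      apply: H => //. rewrite subUset sub1set; apply/andP; split; first exact: j0D.
      apply: subset_trans JD _. exact: subsetDl.
    - move=> j. rewrite mulr_ge0 //=. apply: le_trans (agm j). by rewrite ler_piMl.
    - by rewrite -mulr_sumr.
  have EY : \sum_(i in D :\ j0) lam * a i * w i = lam * X.
    by rewrite /X mulr_sumr; apply: eq_bigr => i _; rewrite mulrA.
  rewrite EY in HY'.
  have H1 : (1 - lam) * X <= (1 - lam) * (S' * w j0) by rewrite ler_wpM2l // subr_ge0.
  have H2 : (1 - lam) * S' * w j0 <= (m - a j0) * w j0 by rewrite ler_wpM2r // ltW.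
  have H3 : a j0 * w j0 + X = a j0 * w j0 + lam * X + (1 - lam) * X by ring.
  rewrite mulrA in H1.
  have H4 : B * m = m * w j0 + (B - w j0) * m by ring.
  rewrite H3 H4.
  have H5 : (m - a j0) * w j0 = m * w j0 - a j0 * w j0 by ring.
  lra.
Qed.
End LP.

Definition phi2 (R : realType) (s : Z24) : R := 16 / 3 - 22 / 5 * (f24 s)%:R.

Lemma natr_subB (R : realType) (m n : nat) : m%:R - n%:R <= (m - n)%:R :> R.
Proof.
case: (leqP n m) => h; first by rewrite natrB.
have : m%:R - n%:R < 0 :> R by rewrite subr_lt0 ltr_nat.
move=> /ltW h2; apply: le_trans h2 _; exact: ler0n.
Qed.

Lemma comb_real (R : realType) (J P : {set Z24}) : (#|J| <= 9)%N ->
  \sum_(j in J) \sum_(t in P) phi2 R (t - j) <= 432.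
Proof.
move=> Hk.
rewrite exchange_big /=.
have E : forall t : Z24, \sum_(j in J) phi2 R (t - j) =
    2 / 15 * ((40 * #|J|)%:R - (33 * \sum_(j in J) f24 (t - j)%R)%:R).
  move=> t. rewrite /phi2 sumrB sumr_const -mulr_sumr -natr_sum !natrM.
  rewrite -mulr_natl. lra.
under eq_bigr => t _ do rewrite E.
rewrite -mulr_sumr.
have H1 : \sum_(t in P) ((40 * #|J|)%:R - (33 * \sum_(j in J) f24 (t - j)%R)%:R) <= (VV J)%:R :> R.
  apply: (@le_trans _ _ (\sum_(t in P) ((40 * #|J|) - (33 * \sum_(j in J) f24 (t - j)%R))%N%:R)).
    apply: ler_sum => t _. exact: natr_subB.
  rewrite /VV natr_sum. rewrite [X in _ <= X](bigID (mem P)) /= lerDl.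
  by apply: sumr_ge0 => t _; exact: ler0n.
have H2 : (VV J)%:R <= 3240 :> R by rewrite ler_nat VV_le.
lra.
Qed.

Lemma gen (R : realType) (a psi psi2 : Z24 -> R) : (forall t, 0 <= a t) ->
  (forall s, psi s <= psi2 s) -> (forall s, psi s <= 16 / 3) ->
  (forall J P : {set Z24}, (#|J| <= 9)%N -> \sum_(j in J) \sum_(t in P) psi2 (t - j) <= 432) ->
  NN (posp (conv a psi)) <= 2 * NN a.
Proof.
move=> ha hp hp2 Hc.
set A := norm1 a. set M := norminf a. set N := NN a.
have aA : A = \sum_t a t by rewrite /A /norm1; apply: eq_bigr => t _; rewrite ger0_norm.
have aM : forall t, a t <= M.
  move=> t. rewrite -(ger0_norm (ha t)) /M /norminf. exact: le_bigmax.
have A0 : 0 <= A by rewrite aA; apply: sumr_ge0.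
have M0 : 0 <= M by apply: le_trans (aM 0); exact: ha.
have N9 : 9 * M <= N by rewrite /N /NN le_max lexx.
have NA : A <= N by rewrite /N /NN le_max lexx orbT.
have ct : forall t, conv a psi t <= 2 / 9 * A.
  move=> t. rewrite /conv aA.
  have : \sum_j a j * psi (t - j) <= \sum_j a j * (16 / 3).
    apply: ler_sum => j _. exact: ler_wpM2l.
  rewrite -mulr_suml. lra.
have part1 : 9 * norminf (posp (conv a psi)) <= 2 * N.
  suff : norminf (posp (conv a psi)) <= 2 / 9 * A by lra.
  rewrite /norminf. apply: bigmax_le.
    lra.
  move=> t _. rewrite /posp ger0_norm; last by rewrite le_max lexx orbT.
  rewrite ge_max ct /=. lra.
have part2 : norm1 (posp (conv a psi)) <= 2 * N.
  set c2 := conv a psi2.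
  have H1 : norm1 (posp (conv a psi)) <= \sum_t Num.max (c2 t) 0.
    rewrite /norm1; apply: ler_sum => t _.
    rewrite /posp ger0_norm; last by rewrite le_max lexx orbT.
    have hc : conv a psi t <= c2 t.
      rewrite /c2 /conv; apply: ler_wpM2l; first by rewrite invr_ge0.
      apply: ler_sum => j _; exact: ler_wpM2l.
    rewrite ge_max !le_max lexx orbT andbT.
    by rewrite hc.
  set P := [set t | 0 <= c2 t].
  have H2 : \sum_t Num.max (c2 t) 0 = \sum_(t in P) c2 t.
    rewrite [RHS]big_mkcond; apply: eq_bigr => t _; rewrite inE.
    by case: lerP.
  pose w j := \sum_(t in P) psi2 (t - j).
  have H3 : \sum_(t in P) c2 t = 24^-1 * \sum_j a j * w j.
    rewrite /c2 /conv -mulr_sumr exchange_big /=; congr (_ * _).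
    apply: eq_bigr => j _. by rewrite /w mulr_sumr.
  have ST : forall F : Z24 -> R, \sum_(j in [set: Z24]) F j = \sum_j F j.
    by move=> F; apply: eq_bigl => j; rewrite inE.
  have H4 : \sum_(j in [set: Z24]) a j * w j <= 432 * (N / 9).
    apply: (@lp R w a (N / 9) 9).
    - move=> J _ Jk. exact: Hc.
    - move=> j; rewrite ha /=. have := aM j. lra.
    - rewrite ST -aA. lra.
  rewrite ST in H4.
  lra.
rewrite /NN ge_max.
apply/andP; split; first exact: part1. exact: part2.
Qed.

Lemma sqrt5_ge (R : realType) : 22 / 5 <= 2 * Num.sqrt 5 :> R.
Proof.
have h : 11 / 5 <= Num.sqrt 5 :> R.
  have -> : 11 / 5 = Num.sqrt ((11 / 5) ^+ 2) :> R.
    by rewrite sqrtr_sqr ger0_norm // divr_ge0.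
  apply: ler_wsqrtr. rewrite expr2. lra.
lra.
Qed.

Lemma phi_le2 (R : realType) s : phi R s <= phi2 R s.
Proof.
rewrite /phi /phi2.
have := ler_wpM2r (ler0n R (f24 s)) (sqrt5_ge R). lra.
Qed.

Lemma phi_le163 (R : realType) s : phi R s <= 16 / 3.
Proof.
rewrite /phi.
have h : 0 <= 2 * Num.sqrt 5 * (f24 s)%:R :> R by rewrite !mulr_ge0 // sqrtr_ge0.
lra.
Qed.

Lemma comb_neg (R : realType) (J P : {set Z24}) : (#|J| <= 9)%N ->
  \sum_(j in J) \sum_(t in P) phi2 R (- (t - j)) <= 432.
Proof.
move=> Hk.
have inj : injective (fun x : Z24 => - x) by apply: oppr_inj.
have := comb_real R [set - j | j in J] [set - t | t in P].
rewrite card_imset // => /(_ Hk).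
rewrite big_imset /=; last by move=> x y _ _; apply: inj.
have E : forall j : Z24, \sum_(t in [set - t | t in P]) phi2 R (t - - j) =
    \sum_(t in P) phi2 R (- t - - j).
  by move=> j; rewrite big_imset //= => x y _ _; apply: inj.
move=> H; apply: le_trans H; rewrite le_eqVlt; apply/orP; left; apply/eqP.
apply: eq_bigr => j _. rewrite E. apply: eq_bigr => t _.
congr phi2. by rewrite opprB opprK addrC.
Qed.

Theorem mainTheorem16 (R : realType) (a : Z24 -> R) :
  (forall t, 0 <= a t) ->
  NN (posp (conv a (phi R))) <= 2 * NN a /\
  NN (posp (conv a (phit R))) <= 2 * NN a.
Proof.
move=> ha; split.
- apply: (@gen R a (phi R) (phi2 R)) => //.
  + exact: phi_le2.
  + exact: phi_le163.
  + exact: comb_real.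
- apply: (@gen R a (phit R) (fun s => phi2 R (- s))) => //.
  + move=> s; exact: phi_le2.
  + move=> s; exact: phi_le163.
  + move=> J P; exact: comb_neg.
Qed.
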